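(* Every generalized Krull domain (in particular, every Noetherian integrally closed domain) is perinormal.
   Context: All rings are commutative with identity; ''local'' means having a unique maximal ideal; an overring of a domain $R$ is a ring between $R$ and its fraction field. A ring extension $A \subseteq B$ satisfies going-down if whenever $\mathfrak{p} \subset \mathfrak{q}$ are primes of $A$ and $Q$ is a prime of $B$ with $Q \cap A = \mathfrak{q}$, there is a prime $P \subseteq Q$ of $B$ with $P \cap A = \mathfrak{p}$. A domain $R$ is perinormal if every local overring $S$ of $R$ such that $R \subseteq S$ satisfies going-down is a localization of $R$. A ring $R$ satisfies (R$_1$) if $R_P$ is a valuation domain for every height one prime $P$ of $R$. Let $\operatorname{Spec}^1(R)$ denote the set of height one primes of $R$. A domain $R$ is a generalized Krull domain if (1) $R = \bigcap_{\mathfrak{p} \in \operatorname{Spec}^1(R)} R_{\mathfrak{p}}$, (2) every nonzero $r \in R$ lies in only finitely many height one primes, and (3) $R$ satisfies (R$_1$). *)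

(* Defs.v *)
(* A domain R is represented as a subring of a field K such
   that K is the fraction field of R; overrings are subrings of K containing R.
   Subsets of K are Prop-valued predicates K -> Prop. *)
From mathcomp Require Import all_boot all_algebra.
Set Implicit Arguments. Unset Strict Implicit. Unset Printing Implicit Defensive.
Import GRing.Theory.
Local Open Scope ring_scope.

Section Defs.
Variable K : fieldType.
Implicit Types (A R S I J P Q : K -> Prop).

Definition is_subring A : Prop :=
  A 0 /\ A 1 /\ (forall x y, A x -> A y -> A (x - y)) /\
  (forall x y, A x -> A y -> A (x * y)).

Definition is_fraction_field R : Prop :=
  forall x : K, exists a b, R a /\ R b /\ b != 0 /\ x = a / b.

Definition overring R S : Prop :=
  is_subring S /\ (forall x, R x -> S x).

Definition is_ideal A I : Prop :=
  (forall x, I x -> A x) /\ I 0 /\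
  (forall x y, I x -> I y -> I (x + y)) /\
  (forall a x, A a -> I x -> I (a * x)).

Definition is_prime A P : Prop :=
  is_ideal A P /\ ~ P 1 /\
  (forall x y, A x -> A y -> P (x * y) -> P x \/ P y).

Definition is_maximal A I : Prop :=
  is_ideal A I /\ ~ I 1 /\
  (forall J, is_ideal A J -> ~ J 1 -> (forall x, I x -> J x) -> forall x, J x -> I x).

Definition is_local A : Prop :=
  exists M, is_maximal A M /\ forall N, is_maximal A N -> forall x, N x <-> M x.

Definition going_down A B : Prop :=
  forall p q Q, is_prime A p -> is_prime A q -> (forall x, p x -> q x) ->
    is_prime B Q -> (forall x, (Q x /\ A x) <-> q x) ->
    exists P, is_prime B P /\ (forall x, P x -> Q x) /\
              (forall x, (P x /\ A x) <-> p x).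

Definition localization_at R (W : K -> Prop) : K -> Prop :=
  fun x => exists a w, R a /\ W w /\ x = a / w.

Definition is_mult_set R (W : K -> Prop) : Prop :=
  (forall w, W w -> R w) /\ W 1 /\ ~ W 0 /\
  (forall v w, W v -> W w -> W (v * w)).

Definition is_localization_of R S : Prop :=
  exists W, is_mult_set R W /\ forall x, S x <-> localization_at R W x.

Definition localize_prime R P : K -> Prop :=
  localization_at R (fun w => R w /\ ~ P w).

Definition height_one R P : Prop :=
  is_prime R P /\ (exists x, P x /\ x != 0) /\
  forall Q, is_prime R Q -> (forall x, Q x -> P x) ->
    (forall x, Q x -> x = 0) \/ (forall x, P x -> Q x).

Definition is_valuation_domain A : Prop :=
  forall x : K, x != 0 -> A x \/ A x^-1.

Definition R1 R : Prop :=
  forall P, height_one R P -> is_valuation_domain (localize_prime R P).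

Definition generalized_krull R : Prop :=
  (forall x, (forall P, height_one R P -> localize_prime R P x) -> R x) /\
  (* (2) each nonzero r lies in only finitely many height one primes *)
  (forall r, R r -> r != 0 ->
     exists (n : nat) (f : nat -> K -> Prop),
       forall P, height_one R P -> P r ->
         exists i, (i < n)%N /\ forall x, P x <-> f i x) /\
  R1 R.

Definition perinormal R : Prop :=
  forall S, overring R S -> is_local S -> going_down R S -> is_localization_of R S.

End Defs.

(* Main.v *)
Require Import Defs.
From mathcomp Require Import all_boot all_algebra.
From mathcomp Require Import ring.
From mathcomp Require Import boolp classical_sets.
From Stdlib Require Import Classical FunctionalExtensionality PropExtensionality.
Set Implicit Arguments. Unset Strict Implicit. Unset Printing Implicit Defensive.
Import GRing.Theory.
Local Open Scope ring_scope.

Lemma sr_add (K : fieldType) (A : K -> Prop) x y :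
  is_subring A -> A x -> A y -> A (x + y).
Proof.
move=> [A0 [A1 [Asub Amul]]] Ax Ay.
have -> : x + y = x - (0 - y) by ring.
by apply: (Asub) => //; apply: (Asub).
Qed.

Lemma sr_opp (K : fieldType) (A : K -> Prop) x :
  is_subring A -> A x -> A (- x).
Proof.
move=> [A0 [A1 [Asub Amul]]] Ax.
have -> : - x = 0 - x by ring.
by apply: (Asub).
Qed.

Lemma sr_exp (K : fieldType) (A : K -> Prop) x k :
  is_subring A -> A x -> A (x ^+ k).
Proof.
move=> HA Ax; elim: k => [|k IH]; first by rewrite expr0; case: HA => _ [].
by rewrite exprS; case: HA => _ [_ [_ Amul]]; apply: (Amul).
Qed.

Lemma prime_exp (K : fieldType) (A P : K -> Prop) x k :
  is_subring A -> is_prime A P -> A x -> ~ P x -> ~ P (x ^+ k).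
Proof.
move=> HA [HI [P1 Pp]] Ax nPx; elim: k => [|k IH]; first by rewrite expr0.
rewrite exprS => H; have [//|//] := Pp _ _ Ax (sr_exp k HA Ax) H.
Qed.

Lemma prime_ne0 (K : fieldType) (A P : K -> Prop) x :
  is_prime A P -> ~ P x -> x != 0.
Proof. by move=> [[_ [P0 _]] _] nP; apply/eqP => E; apply: nP; rewrite E. Qed.

Lemma loc_R (K : fieldType) (R p : K -> Prop) x :
  is_subring R -> is_prime R p -> R x -> localize_prime R p x.
Proof.
move=> HR [_ [p1 _]] Rx; exists x, 1; split=> //; split; last by rewrite divr1.
by split=> //; case: HR => _ [].
Qed.

Lemma loc_mul (K : fieldType) (R p : K -> Prop) x y :
  is_subring R -> is_prime R p -> localize_prime R p x -> localize_prime R p y ->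
  localize_prime R p (x * y).
Proof.
move=> HR Hp [a [w [Ra [[Rw nw] ->]]]] [c [v [Rc [[Rv nv] ->]]]].
have Hm := HR; case: Hm => _ [_ [_ Rmul]].
exists (a * c), (w * v); split; first exact: Rmul.
split; last by rewrite invfM; ring.
split; first exact: Rmul.
by case: Hp => _ [_ pp] /(pp _ _ Rw Rv) [].
Qed.

Lemma loc_add (K : fieldType) (R p : K -> Prop) x y :
  is_subring R -> is_prime R p -> localize_prime R p x -> localize_prime R p y ->
  localize_prime R p (x + y).
Proof.
move=> HR Hp [a [w [Ra [[Rw nw] ->]]]] [c [v [Rc [[Rv nv] ->]]]].
have Hm := HR; case: Hm => _ [_ [_ Rmul]].
have w0 := prime_ne0 Hp nw; have v0 := prime_ne0 Hp nv.
exists (a * v + c * w), (w * v); split; first by apply: sr_add => //; apply: Rmul.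
split; last by field; apply/andP.
split; first exact: Rmul.
by case: Hp => _ [_ pp] /(pp _ _ Rw Rv) [].
Qed.

Lemma loc_exp (K : fieldType) (R p : K -> Prop) x k :
  is_subring R -> is_prime R p -> localize_prime R p x ->
  localize_prime R p (x ^+ k).
Proof.
move=> HR Hp Vx; elim: k => [|k IH]; first by rewrite expr0; apply: loc_R => //; case: HR => _ [].
by rewrite exprS; apply: loc_mul.
Qed.

Lemma loc_cancel (K : fieldType) (R p : K -> Prop) y r :
  is_subring R -> is_prime R p -> R r -> ~ p r ->
  localize_prime R p (y * r) -> localize_prime R p y.
Proof.
move=> HR Hp Rr nr [c [w [Rc [[Rw nw] E]]]].
have Hm := HR; case: Hm => _ [_ [_ Rmul]].
have w0 := prime_ne0 Hp nw; have r0 := prime_ne0 Hp nr.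
exists c, (w * r); split=> //; split.
  split; first exact: Rmul.
  by case: Hp => _ [_ pp] /(pp _ _ Rw Rr) [].
have -> : y = (y * r) / r by field.
by rewrite E; field; apply/andP.
Qed.

Lemma max_prime (K : fieldType) (S M : K -> Prop) :
  is_subring S -> is_maximal S M -> is_prime S M.
Proof.
move=> HS [HI [M1 Mmax]]; split=> //; split=> // x y Sx Sy Mxy.
have [Mx|nMx] := classic (M x); first by left.
have Hm := HS; case: Hm => S0 [S1 [Ssub Smul]].
have [MS [M0 [Madd Mmul]]] := HI.
pose J := fun z => exists m s, M m /\ S s /\ z = m + s * x.
have HJ : is_ideal S J.
  split; first by move=> z [m [s [Mm [Ss ->]]]]; apply: sr_add => //; [exact: MS|exact: Smul].
  split; first by exists 0, 0; split=> //; split=> //; ring.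
  split.
    move=> z1 z2 [m1 [s1 [Mm1 [Ss1 ->]]]] [m2 [s2 [Mm2 [Ss2 ->]]]].
    exists (m1 + m2), (s1 + s2); split; first exact: Madd.
    by split; [apply: sr_add|ring].
  move=> a z Sa [m [s [Mm [Ss ->]]]]; exists (a * m), (a * s); split; first exact: Mmul.
  by split; [apply: Smul|ring].
have [J1|nJ1] := classic (J 1).
  right; case: J1 => m [s [Mm [Ss E]]].
  have -> : y = y * m + s * (x * y).
    by transitivity (y * 1); [rewrite mulr1|rewrite E; ring].
  by apply: Madd; apply: (Mmul).
exfalso; apply: nMx; apply: (Mmax J HJ nJ1).
  by move=> z Mz; exists z, 0; split=> //; split=> //; ring.
by exists 0, 1; split=> //; split=> //; ring.
Qed.

Local Open Scope classical_set_scope.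

Lemma nonunit_max (K : fieldType) (S M : K -> Prop) x :
  is_subring S -> is_maximal S M ->
  (forall N, is_maximal S N -> forall z, N z <-> M z) ->
  S x -> (forall y, S y -> x * y <> 1%R) -> M x.
Proof.
move=> HS HM Muniq Sx nu.
have Hm := HS; case: Hm => S0 [S1 [Ssub Smul]].
pose J := fun z => exists s, S s /\ z = (s * x)%R.
have HJ : is_ideal S J.
  split; first by move=> z [s [Ss ->]]; exact: Smul.
  split; first by exists 0%R; split=> //; ring.
  split; first by move=> z1 z2 [s1 [Ss1 ->]] [s2 [Ss2 ->]]; exists (s1 + s2)%R; split; [apply: sr_add|ring].
  by move=> a z Sa [s [Ss ->]]; exists (a * s)%R; split; [apply: Smul|ring].
have nJ1 : ~ J 1%R by move=> [s [Ss E]]; apply: (nu s Ss); rewrite mulrC E.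
pose P := fun I : set K => (forall y, ~ I y) \/ (is_ideal S I /\ ~ I 1%R /\ I x).
have [A [PA Amax]] : exists A, P A /\ forall B, A `<` B -> ~ P B.
  apply: Zorn_bigcup => F FP Ftot.
  have [[X0 [FX0 [y0 X0y0]]]|none] := classic (exists X, F X /\ exists y, X y).
    right.
    have PX0 := FP _ FX0.
    have ideal_of : forall X y, F X -> X y -> is_ideal S X /\ ~ X 1%R /\ X x.
      move=> X y FX Xy; case: (FP _ FX) => [E|//]; by case: (E y).
    have [HX0 [nX01 X0x]] := ideal_of _ _ FX0 X0y0.
    split; last split.
    - split; first by move=> z [X FX Xz]; have [[? _] _] := ideal_of _ _ FX Xz; auto.
      split; first by exists X0 => //; case: HX0 => _ [].
      split.
        move=> z1 z2 [X1 FX1 Xz1] [X2 FX2 Xz2].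
        have [s12|s21] := Ftot _ _ FX1 FX2.
          exists X2 => //; have [[_ [_ [ad _]]] _] := ideal_of _ _ FX2 Xz2.
          by apply: ad => //; apply: s12.
        exists X1 => //; have [[_ [_ [ad _]]] _] := ideal_of _ _ FX1 Xz1.
        by apply: ad => //; apply: s21.
      move=> a z Sa [X FX Xz]; exists X => //.
      by have [[_ [_ [_ mu]]] _] := ideal_of _ _ FX Xz; apply: mu.
    - by move=> [X FX X1]; have [_ [? _]] := ideal_of _ _ FX X1.
    - by exists X0.
  left => y [X FX Xy]; apply: none; exists X; split=> //; by exists y.
case: PA => [Aempty|[HA [nA1 Ax]]].
  exfalso; apply: (Amax J); last by right; split=> //; split=> //; exists 1%R; split=> //; ring.
  split; first by move=> z Az; case: (Aempty z Az).
  move=> sub; have := sub 0%R; case: HJ => _ [J0 _] => /(_ J0) H.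
  by case: (Aempty _ H).
have AmaxI : is_maximal S A.
  split=> //; split=> // I HI nI1 AI z Iz.
  apply: NNPP => nAz; apply: (Amax I); last by right; split=> //; split=> //; apply: AI.
  by split=> //; move=> sub; apply: nAz; apply: sub.
by apply/(Muniq _ AmaxI).
Qed.
Local Close Scope classical_set_scope.

Lemma val_cmp (K : fieldType) (R p : K -> Prop) r1 r2 :
  is_valuation_domain (localize_prime R p) -> r1 != 0 -> r2 != 0 ->
  localize_prime R p (r1 / r2) \/ localize_prime R p (r2 / r1).
Proof.
move=> Hv n1 n2; have := Hv (r1 / r2); rewrite invf_div; apply.
by rewrite mulf_eq0 invr_eq0 negb_or n1 n2.
Qed.

Lemma rad_lemma (K : fieldType) (R p : K -> Prop) x b :
  is_subring R -> height_one R p -> is_valuation_domain (localize_prime R p) ->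
  R b -> b != 0 -> R (b * x) -> ~ localize_prime R p x ->
  forall s, p s -> exists k, localize_prime R p (s ^+ k * x).
Proof.
move=> HR [Hp [_ Hmin]] Hv Rb b0 Rbx nVx.
have Hm := HR; case: Hm => R0 [R1 [Rsub Rmul]].
pose V := localize_prime R p.
have VR : forall y, R y -> V y by move=> y Ry; apply: loc_R.
pose rad := fun r => R r /\ exists k, V (r ^+ k * x).
have rad0 : rad 0 by split=> //; exists 1%N; rewrite expr1 mul0r; apply: VR.
have add_aux : forall r1 r2 k, R r1 -> R r2 -> r2 != 0 -> V (r1 / r2) ->
    V (r2 ^+ k * x) -> rad (r1 + r2).
  move=> r1 r2 k R1' R2' n2 Vq Vk; split; first exact: sr_add.
  exists k; have e1 : r1 + r2 = r2 * (r1 / r2 + 1) by field.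
  rewrite e1 exprMn.
  have -> : r2 ^+ k * (r1 / r2 + 1) ^+ k * x = (r2 ^+ k * x) * (r1 / r2 + 1) ^+ k by ring.
  apply: loc_mul => //; apply: loc_exp => //; apply: loc_add => //; exact: VR.
have Hrad : is_prime R rad.
  split; last split.
  - split; first by move=> y [].
    split=> //; split.
      move=> r1 r2 [R1' [k1 V1]] [R2' [k2 V2]].
      have [->|n1] := eqVneq r1 0; first by rewrite add0r; split=> //; exists k2.
      have [->|n2] := eqVneq r2 0; first by rewrite addr0; split=> //; exists k1.
      case: (val_cmp Hv n1 n2) => Vq; first exact: (add_aux _ _ k2).
      by rewrite addrC; apply: (add_aux _ _ k1).
    move=> a r Ra [Rr [k Vk]]; split; first exact: Rmul.
    exists k; rewrite exprMn -mulrA; apply: loc_mul => //; apply: VR; exact: sr_exp.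
  - by move=> [_ [k]]; rewrite expr1n mul1r.
  - move=> r1 r2 R1' R2' [_ [k Vk]].
    have [->|n1] := eqVneq r1 0; first by left.
    have [->|n2] := eqVneq r2 0; first by right.
    have key : forall u v, R u -> v != 0 -> V (u / v) -> V ((u * v) ^+ k * x) -> rad u.
      move=> u v Ru v0 Vuv Vk'; split=> //; exists (2 * k)%N.
      have -> : u ^+ (2 * k) * x = ((u * v) ^+ k * x) * (u / v) ^+ k.
        have -> : (u * v) ^+ k * x * (u / v) ^+ k = ((u * v) * (u / v)) ^+ k * x.
          by rewrite [in RHS]exprMn; ring.
        by rewrite exprM; congr (_ ^+ _ * _); field.
      by apply: loc_mul => //; apply: loc_exp.
    case: (val_cmp Hv n1 n2) => Vq; first by left; apply: (key _ r2).
    by right; apply: (key _ r1) => //; rewrite [r2 * r1]mulrC.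
have rad_p : forall y, rad y -> p y.
  move=> y [Ry [k Vk]]; apply: NNPP => npy; apply: nVx.
  apply: (loc_cancel (r := y ^+ k)) => //; first exact: sr_exp.
    exact: prime_exp HR Hp Ry npy.
  by rewrite mulrC.
have radb : rad b by split=> //; exists 1%N; rewrite expr1; apply: VR.
case: (Hmin rad Hrad rad_p) => [Hz|Hall].
  by move: b0; rewrite (Hz b radb) eqxx.
by move=> s ps; case: (Hall s ps).
Qed.

Lemma gd_loc (K : fieldType) (R S P p : K -> Prop) x :
  is_subring R -> is_subring S -> (forall y, R y -> S y) ->
  is_prime S P -> (forall y, (P y /\ R y) <-> p y) -> is_prime R p ->
  is_valuation_domain (localize_prime R p) -> S x -> localize_prime R p x.
Proof.
move=> HR HS RS HP Pp Hp Hv Sx.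
have [->|x0] := eqVneq x 0; first by apply: loc_R => //; case: HR.
case: (Hv x x0) => // Vi.
apply: NNPP => nVx.
case: Vi => c [w [Rc [[Rw nw] E]]].
have c0 : c != 0.
  by apply/eqP => c0; move: E; rewrite c0 mul0r => /eqP; rewrite invr_eq0 (negbTE x0).
have ex : x = w / c by rewrite -invf_div -E invrK.
have pc : p c.
  apply: NNPP => npc; apply: nVx; exists w, c; split=> //.
have Pc : P c by case: (Pp c) => _ /(_ pc) [].
have Pw : P w.
  have -> : w = x * c by rewrite ex; field.
  by case: HP => [[_ [_ [_ Pmul]]] _]; apply: Pmul.
by apply: nw; apply/(Pp w).
Qed.

Lemma pred_ext (K : Type) (P Q : K -> Prop) : (forall y, P y <-> Q y) -> P = Q.
Proof.
move=> H; apply: functional_extensionality => y; exact: propositional_extensionality.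
Qed.

Theorem theorem3p10 (K : fieldType) (R : K -> Prop) :
  is_subring R -> is_fraction_field R -> generalized_krull R -> perinormal R.
Proof.
move=> HR Hff [K1 [K2 K3]] S [HS RS] [M [HM Muniq]] Hgd.
have Hm := HR; case: Hm => R0 [R1' [Rsub Rmul]].
have Hs := HS; case: Hs => S0 [S1 [Ssub Smul]].
have MP := max_prime HS HM.
have [[MS [M0 [Madd Mmul]]] [nM1 Mpr]] := MP.
pose W := fun y => R y /\ ~ M y.
have Wmul : forall u v, W u -> W v -> W (u * v).
  move=> u v [Ru nu] [Rv nv]; split; first exact: Rmul.
  by case/(Mpr _ _ (RS _ Ru) (RS _ Rv)).
have W0 : forall u, W u -> u != 0.
  by move=> u [_ nu]; apply/eqP => E; apply: nu; rewrite E.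
exists W; split.
  split; first by move=> w [].
  split; first by split.
  split; first by case.
  exact: Wmul.
move=> x; split; last first.
  move=> [a [w [Ra [[Rw nMw] ->]]]].
  apply: Smul; first exact: RS.
  apply: NNPP => nSi; apply: nMw.
  apply: (nonunit_max HS HM Muniq (RS _ Rw)) => y Sy E.
  have w0 : w != 0 by apply/eqP => w0; move: E; rewrite w0 mul0r => /eqP; rewrite eq_sym oner_eq0.
  apply: nSi; have -> : w^-1 = y by rewrite -[y](mulKf w0) E mulr1.
  done.
move=> Sx.
have [a [b [Ra [Rb [b0 xab]]]]] := Hff x.
have Rbx : R (b * x) by rewrite xab; have -> : b * (a / b) = a by field.
pose m := fun y => M y /\ R y.
have Hmp : is_prime R m.
  split; last split.
  - split; first by move=> y [].
    split; first by split.
    split; first by move=> y z [My Ry] [Mz Rz]; split; [apply: Madd|apply: sr_add].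
    by move=> c y Rc [My Ry]; split; [apply: Mmul => //; apply: RS|apply: Rmul].
  - by case.
  - by move=> y z Ry Rz [Myz _]; case: (Mpr _ _ (RS _ Ry) (RS _ Rz) Myz) => H; [left|right].
have VR : forall P, is_prime R P -> forall y, R y -> localize_prime R P y.
  by move=> P HP y Ry; apply: loc_R.
have Hclaim : forall n' (f : nat -> K -> Prop), exists s, W s /\ forall P, height_one R P -> P b ->
    ~ (forall y, P y -> M y) -> (exists i, (i < n')%N /\ forall y, P y <-> f i y) ->
    localize_prime R P (s * x).
  move=> n' f; elim: n' => [|n' [s [Ws Hs']]].
    by exists 1; split; [split=> //|move=> P _ _ _ [i []]].
  have [[P0 [H0 [P0b [nsub E0]]]]|none] := classic (exists P0, height_one R P0 /\ P0 b /\
      ~ (forall y, P0 y -> M y) /\ forall y, P0 y <-> f n' y).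
    have [Hp0 _] := H0.
    have [t [Wt Vt]] : exists t, W t /\ localize_prime R P0 (t * x).
      have [Vx|nVx] := classic (localize_prime R P0 x).
        by exists 1; split; [split=> //|rewrite mul1r].
      have [s0 [P0s0 nMs0]] : exists s0, P0 s0 /\ ~ M s0.
        apply: NNPP => H; apply: nsub => y Py; apply: NNPP => nMy; apply: H; by exists y.
      have Rs0 : R s0 by case: Hp0 => [[sub _] _]; apply: sub.
      have [k Vk] := rad_lemma HR H0 (K3 _ H0) Rb b0 Rbx nVx P0s0.
      exists (s0 ^+ k); split=> //; split; first exact: sr_exp.
      exact: prime_exp HS MP (RS _ Rs0) nMs0.
    exists (s * t); split; first exact: Wmul.
    move=> P HP Pb nPs [i [ltin Ei]].
    have [HPp _] := HP.
    have [ltin'|ein] : (i < n')%N \/ i = n' by move: ltin; rewrite ltnS leq_eqVlt => /orP[/eqP|]; auto.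
      have -> : s * t * x = t * (s * x) by ring.
      apply: loc_mul => //; first by apply: VR => //; case: Wt.
      by apply: Hs' => //; exists i.
    have EP : P = P0 by apply: pred_ext => y; rewrite Ei E0 ein.
    rewrite EP -mulrA; apply: loc_mul => //; apply: VR => //; by case: Ws.
  exists s; split; first done.
  move=> P HP Pb nPs [i [ltin Ei]].
  have [ltin'|ein] : (i < n')%N \/ i = n' by move: ltin; rewrite ltnS leq_eqVlt => /orP[/eqP|]; auto.
    by apply: Hs' => //; exists i.
  exfalso; apply: none; exists P; split=> //; split=> //; split=> //.
  by rewrite -ein.
have [n [f Hnf]] := K2 b Rb b0.
have [s [[Rs nMs] Hs']] := Hclaim n f.
have Rsx : R (s * x).
  apply: K1 => P HP.
  have [HPp _] := HP.
  have [sub|nsub] := classic (forall y, P y -> M y).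
    apply: loc_mul => //; first exact: VR.
    have Psub : forall y, P y -> m y.
      by move=> y Py; split; [apply: sub|case: HPp => [[PR _] _]; apply: PR].
    have [P' [HP' [_ EP']]] := Hgd P m M HPp Hmp Psub MP (fun y => iff_refl _).
    exact: gd_loc HR HS RS HP' EP' HPp (K3 _ HP) Sx.
  have [Pb|nPb] := classic (P b).
    by apply: Hs' => //; case: (Hnf P HP Pb) => i [lt Ei]; exists i.
  apply: loc_mul => //; first exact: VR.
  by rewrite xab; exists a, b.
exists (s * x), s; split=> //; split; first by split.
by field; apply: W0.
Qed.
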